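(* Let $p$ be an odd prime, $\ell$ an integer not divisible by $p$, $a$ the remainder of $\ell$ modulo $p$ and $a_0=\lfloor\ell/p\rfloor$. Let $\nu_i=\lfloor\frac{a+i\ell}{p}\rfloor$ and $n_i=\min_{0\le j\le p-1-i}(\nu_{i+j}-\nu_j)$ for $0\le i\le p-1$. Then for every $0\le i\le p-1$, $$n_i=ia_0+\Big\lfloor i\frac{a}{p}\Big\rfloor+\epsilon_i,$$ where $\epsilon_i=1$ if $p-i\in E$ and $\epsilon_i=0$ otherwise.
   Context: For a real number $x$, $\operatorname{frac}(x)=x-\lfloor x\rfloor$. The set $E$ is defined as $E=\{h\in\mathbb{Z}: 1\le h<p,\ \text{and for all integers } 1\le h'<h,\ \operatorname{frac}(h'a/p)>\operatorname{frac}(ha/p)\}$. *)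

(* Defs.v *)
From mathcomp Require Import all_boot all_order all_algebra.
Set Implicit Arguments. Unset Strict Implicit. Unset Printing Implicit Defensive.
Import Order.TTheory GRing.Theory Num.Theory.
Local Open Scope ring_scope.

Definition frac (x : rat) : rat := x - (Num.floor x)%:~R.

Definition in_E (p : nat) (a : int) (h : nat) : bool :=
  [&& (1 <= h)%N, (h < p)%N &
  [forall h' : 'I_h, (1 <= h')%N ==>
    (frac ((h : int)%:~R * a%:~R / (p : int)%:~R)
      < frac (((nat_of_ord h') : int)%:~R * a%:~R / (p : int)%:~R))]].

Definition rem_a (p : nat) (l : int) : int := (l %% (p : int))%Z.
Definition a0 (p : nat) (l : int) : int := Num.floor (l%:~R / (p : int)%:~R : rat).

Definition nu (p : nat) (l : int) (i : nat) : int :=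
  Num.floor (((rem_a p l) + (i : int) * l)%:~R / (p : int)%:~R : rat).

(* n_i = min_{0 <= j <= p-1-i} (nu_{i+j} - nu_j); the seed (j = 0 term) is in range *)
Definition n_ (p : nat) (l : int) (i : nat) : int :=
  \big[Num.min/(nu p l i - nu p l 0)]_(j < p - i) (nu p l (i + j) - nu p l j).

Definition eps (p : nat) (l : int) (i : nat) : int :=
  if in_E p (rem_a p l) (p - i) then 1 else 0.

(* Main.v *)
Require Import Defs.
From mathcomp Require Import all_boot all_order all_algebra.
From mathcomp Require Import zify ring lra.
Set Implicit Arguments. Unset Strict Implicit.
Import Order.TTheory GRing.Theory Num.Theory.

Lemma rpos p A k : prime p -> (0 < A < p)%N -> (0 < k < p)%N -> (0 < (k * A) %% p)%N.
Proof.
move=> pr /andP[A0 Ap] /andP[k0 kp]; rewrite lt0n; apply/negP => /eqP h.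
have : (p %| k * A)%N by rewrite /dvdn h.
by rewrite Euclid_dvdM // => /orP[] /dvdn_leq; lia.
Qed.

Lemma rdist p A m n : prime p -> (0 < A < p)%N -> (1 <= m)%N -> (m < n)%N -> (n < p)%N ->
  (m * A) %% p != (n * A) %% p.
Proof.
move=> pr /andP[A0 Ap] m1 mn np; apply/negP => /eqP h.
have : (n * A == m * A %[mod p])%N by rewrite h.
rewrite eqn_mod_dvd ?leq_mul2r ?(ltnW mn) ?orbT // -mulnBl Euclid_dvdM //.
by case/orP => /dvdn_leq; lia.
Qed.

Lemma rsum p A i : prime p -> (0 < A < p)%N -> (0 < i < p)%N ->
  ((i * A) %% p + ((p - i) * A) %% p = p)%N.
Proof.
move=> pr hA hi.
have h1 := rpos pr hA hi.
have hi2 : (0 < p - i < p)%N by lia.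
have h2 := rpos pr hA hi2.
have h3 := ltn_pmod (i * A) (prime_gt0 pr).
have h4 := ltn_pmod ((p - i) * A) (prime_gt0 pr).
have : (p %| (i * A) %% p + ((p - i) * A) %% p)%N.
  by rewrite /dvdn modnDm -mulnDl subnKC ?(ltnW (proj2 (andP hi))) // modnMr.
case/dvdnP => k hk; rewrite hk in h1 h3 h4 *.
have : (k < 2)%N by nia.
have : (0 < k)%N by nia.
by case: k {hk h1 h3 h4} => [|[|]] //; rewrite mul1n.
Qed.

Local Open Scope ring_scope.

Lemma floor_divz (x d : int) : 0 < d -> Num.floor (x%:~R / d%:~R : rat) = (x %/ d)%Z.
Proof.
move=> d0; apply: floor_def.
have d0' : (0 : rat) < d%:~R by rewrite ltr0z.
rewrite ler_pdivlMr // ltr_pdivrMr // -!intrM ler_int ltr_int.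
have := divz_eq x d; have := modz_ge0 x (lt0r_neq0 d0); have := ltz_pmod x d0.
lia.
Qed.

Lemma bigmin_eq n (x0 v : int) (F : 'I_n -> int) : v <= x0 -> (forall j, v <= F j) ->
  (exists j, F j = v) -> \big[Num.min/x0]_(j < n) F j = v.
Proof.
move=> h0 hF [j Fj]; apply/eqP; rewrite eq_le; apply/andP; split.
  have H : forall r : seq 'I_n, j \in r -> \big[Num.min/x0]_(k <- r) F k <= v.
    elim=> //= y r IH; rewrite inE big_cons ge_min => /orP[/eqP<-|/IH->].
      by rewrite Fj lexx.
    by rewrite orbT.
  by apply: (H (index_enum _)); rewrite mem_index_enum.
by apply: (big_ind (fun x => v <= x)) => // x y hx hy; rewrite le_min hx hy.
Qed.

Lemma frac_nat (k A p : nat) : (0 < p)%N ->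
  Defs.frac ((k : int)%:~R * (A : int)%:~R / (p : int)%:~R : rat) = ((k * A) %% p)%N%:R / p%:R.
Proof.
move=> p0; rewrite /Defs.frac -intrM floor_divz ?ltz_nat // -PoszM divz_nat.

have pn : (p%:R : rat) != 0 by rewrite pnatr_eq0 -lt0n.
rewrite {1}(divn_eq (k * A) p) PoszD PoszM intrD intrM.
have pn2 : (p%:~R : rat) != 0 by rewrite intr_eq0 -lt0n.
field.
by [].
Qed.


Lemma in_E_nat p A h : (0 < p)%N -> in_E p (Posz A) h =
  [&& (1 <= h)%N, (h < p)%N & [forall h' : 'I_h, (1 <= h')%N ==> ((h * A) %% p < (h' * A) %% p)%N]].
Proof.
move=> p0; rewrite /in_E; congr [&& _, _ & _]; apply: eq_forallb => h'.
rewrite !frac_nat // ltr_pM2r ?invr_gt0 ?ltr0n // ltr_nat. congr (_ ==> _).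
Qed.

Lemma core p A i : prime p -> (0 < A < p)%N -> (i < p)%N ->
 (in_E p (Posz A) (p - i) -> forall m, (1 <= m <= p - i)%N -> (p <= (i*A)%%p + (m*A)%%p)%N) /\
 (~~ in_E p (Posz A) (p - i) -> exists2 m, (1 <= m <= p - i)%N & ((i*A)%%p + (m*A)%%p < p)%N).
Proof.
move=> pr hA ip; have p0 := prime_gt0 pr.
rewrite in_E_nat //.
case: (posnP i) => [->|i0].
  rewrite subn0 ltnn andbF; split=> // _; exists 1%N; first by lia.
  by rewrite mul0n mod0n add0n mul1n modn_small; case/andP: hA.
have hi : (0 < i < p)%N by rewrite i0.
have S := rsum pr hA hi.
have h1 : (1 <= p - i)%N by lia.
have h2 : (p - i < p)%N by lia.
rewrite h1 h2 /=; split.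
- move=> /forallP H m /andP[m1 mh].
  case: (ltngtP m (p - i)) mh => // [mlt|->] _; last by rewrite S.
  have := H (Ordinal mlt); rewrite /= m1 /= => hlt; lia.
- rewrite negb_forall => /existsP [h']; rewrite negb_imply -leqNgt => /andP[h'1 hle].
  exists h'; first by rewrite h'1 ltnW.
  have := rdist pr hA h'1 (ltn_ord h') h2; lia.
Qed.

Theorem lemma7p1 (p : nat) (l : int) :
  prime p -> odd p -> ~~ ((p : int) %| l)%Z ->
  forall i : nat, (i <= p - 1)%N ->
    n_ p l i = (i : int) * a0 p l
               + Num.floor ((i : int)%:~R * (rem_a p l)%:~R / (p : int)%:~R : rat)
               + eps p l i.
Proof.
move=> pr oddp ndvd i hi.
have p0 := prime_gt0 pr.
have ip : (i < p)%N by lia.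
have pz : (p : int) != 0 by rewrite eqz_nat -lt0n.
have pz0 : 0 < (p : int) by rewrite ltz_nat.
have ra0 := modz_ge0 l pz.
have [A eA] : exists A : nat, rem_a p l = Posz A by exists `|rem_a p l|%N; rewrite gez0_abs.
have hA : (0 < A < p)%N.
  have := ltz_pmod l pz0.
  have : rem_a p l != 0.
    by apply: contra ndvd => /eqP h; apply/dvdz_mod0P.
  rewrite /rem_a in eA *; rewrite eA; lia.
have ea0 : a0 p l = (l %/ p)%Z by rewrite /a0 floor_divz.
have el : l = (l %/ p)%Z * p + A by rewrite -eA; exact: divz_eq.
set q := (l %/ p)%Z in ea0 el.
have nuE : forall k, nu p l k = (k:int) * q + Posz ((k.+1 * A) %/ p)%N.
  move=> k; rewrite /nu floor_divz // eA.
  have -> : (A%:Z + k%:Z * l = (k%:Z * q) * p + ((k.+1 * A)%N : int)).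
    by rewrite el PoszM -addn1 PoszD; ring.
  by rewrite divzMDl // divz_nat.
have eqt : forall j, nu p l (i + j) - nu p l j =
   i%:Z * q + Posz ((i * A) %/ p)%N + Posz (p <= (i * A) %% p + (j.+1 * A) %% p)%N.
  move=> j; rewrite !nuE.
  have -> : ((i + j).+1 * A = i * A + j.+1 * A)%N by ring.
  rewrite divnD // !PoszD; ring.
rewrite eA -intrM floor_divz // -PoszM divz_nat /n_ ea0.
rewrite /eps eA.
have [C1 C2] := core pr hA ip.
have pi0 : (0 < p - i)%N by lia.
apply: bigmin_eq.
- have := eqt 0%N; rewrite addn0 => ->.
  case: ifP => hE; last by rewrite addr0 lerDl.
  by rewrite lerD2l (C1 hE) // pi0.
- move=> j; rewrite eqt.
  case: ifP => hE; last by rewrite addr0 lerDl.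
  by rewrite lerD2l (C1 hE) //= ltn_ord.
- case: ifP => hE.
    by exists (Ordinal pi0); rewrite eqt /= (C1 hE) // pi0.
  have [m /andP[m1 mle] mlt] := C2 (negbT hE).
  have mj : (m.-1 < p - i)%N by lia.
  exists (Ordinal mj); rewrite eqt /= prednK //.
  by rewrite leqNgt mlt addr0.
Qed.
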